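(* Every real-valued function $f$ on streams that is subadditive, non-negative, bounded and monotone is $2$-almost-smooth.
   Context: For disjoint consecutive segments $A,B$ of a stream, $AB$ denotes their concatenation; $n$ is a size measure of the stream. $f$ is subadditive if $f(AB)\le f(A)+f(B)$ for all disjoint segments $A,B$; non-negative if $f(A)\ge0$; bounded if $f(A)\le\mathrm{poly}(n)$ for every stream $A$; monotone if $f(AB)\ge f(B)$ and $f(AB)\ge f(A)$ for all disjoint segments $A,B$. A function is $d$-almost-smooth if it is $(1,d)$-almost-smooth, where $f$ is $(c,d)$-almost-smooth ($c,d\ge1$) if: (1) $f(A)\ge0$ for all $A$; (2) $f(B)\le c\,f(AB)$ for all disjoint segments $A,B$; (3) $f(A)\le\mathrm{poly}(n)$; (4) for all disjoint consecutive segments $A,B,C$ with $f(AB)\neq0$ and $f(ABC)\ne0$, $\frac{f(B)}{f(AB)}\le d\cdot\frac{f(BC)}{f(ABC)}$. *)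

(* Defs.v *)
(* Streams over an alphabet T are finite sequences (seq T);
   concatenation of disjoint consecutive segments A,B is A ++ B. *)
From mathcomp Require Import all_boot all_order all_algebra.
Set Implicit Arguments. Unset Strict Implicit. Unset Printing Implicit Defensive.
Import Order.TTheory GRing.Theory Num.Theory.
Local Open Scope ring_scope.

Section Defs.
Variables (R : realFieldType) (T : Type).
Implicit Types (f : seq T -> R).

Definition subadditive f := forall A B : seq T, f (A ++ B) <= f A + f B.
Definition nonnegative f := forall A : seq T, 0 <= f A.
Definition poly_bounded f :=
  exists (C k : nat), forall A : seq T, f A <= C%:R * (size A)%:R ^+ k + C%:R.
Definition monotone f := forall A B : seq T, f B <= f (A ++ B) /\ f A <= f (A ++ B).

Definition almost_smooth (c d : R) f :=
  [/\ 1 <= c, 1 <= d,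
      nonnegative f,
      (forall A B : seq T, f B <= c * f (A ++ B)) &
      poly_bounded f /\
      (forall A B C : seq T, f (A ++ B) != 0 -> f (A ++ B ++ C) != 0 ->
         f B / f (A ++ B) <= d * (f (B ++ C) / f (A ++ B ++ C)))].

Definition d_almost_smooth (d : R) f := almost_smooth 1 d f.
End Defs.

(* Main.v *)
Require Import Defs.
From mathcomp Require Import all_boot all_order all_algebra.
From mathcomp Require Import lra.
Import Order.TTheory GRing.Theory Num.Theory.
Local Open Scope ring_scope.

Theorem lemma2p4 (R : realFieldType) (T : Type) (f : seq T -> R) :
  subadditive f -> nonnegative f -> poly_bounded f -> monotone f ->
  d_almost_smooth 2 f.
Proof.
move=> sa nn pb mo; split => //.
- by rewrite ler1n.
- by move=> A B; rewrite mul1r; case: (mo A B).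
split => // A B C nAB nABC.
have y0 : 0 < f (A ++ B) by rewrite lt_def nAB nn.
have w0 : 0 < f (A ++ B ++ C) by rewrite lt_def nABC nn.
have h1 := sa A (B ++ C).
have [h2 h3] := mo A B.
have [_ h4] := mo B C.
have h5 := nn B.
set x := f B in h2 h4 h5 *; set y := f (A ++ B) in y0 h2 h3 *.
set z := f (B ++ C) in h1 h4 *; set w := f (A ++ B ++ C) in w0 h1 *.
have e : 2 * (z / w) = (2 * z) / w by rewrite mulrA.
rewrite e ler_pdivrMr // mulrAC ler_pdivlMr //.
have : x * w <= x * (y + z) by rewrite ler_wpM2l // (le_trans h1) // lerD2r.
have hxy : x * y <= z * y by nra.
have hxz : x * z <= y * z by nra.
move=> hw; rewrite mulrDr in hw.
apply: (le_trans hw).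
have -> : 2 * z * y = z * y + y * z by rewrite -mulrA mulr_natl mulr2n [y * z]mulrC.
exact: lerD.
Qed.
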